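(* Let $F=F(N,\mathcal D)$ be a GSC. Then $F$ is connected if and only if $Q_3$ is connected.
   Context: GSC: $N\ge2$, $\mathcal D\subset\{0,\dots,N-1\}^2$ with $1<|\mathcal D|<N^2$, $\varphi_i(x)=\frac1N(x+i)$, $F$ the attractor $F=\bigcup_{i\in\mathcal D}\varphi_i(F)$. $Q_0=[0,1]^2$ and $Q_n=\bigcup_{i\in\mathcal D}\varphi_i(Q_{n-1})$ for $n\ge1$. *)

(* Defs.v *)
From HB Require Import structures.
From mathcomp Require Import all_boot all_order all_algebra.
From mathcomp Require Import all_classical all_reals all_analysis.
Set Implicit Arguments. Unset Strict Implicit. Unset Printing Implicit Defensive.
Import Order.TTheory GRing.Theory Num.Theory.
Import numFieldNormedType.Exports.
Local Open Scope classical_set_scope.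
Local Open Scope ring_scope.

Definition gsc_map {R : realType} (N : nat) (i : 'I_N * 'I_N) (x : R * R) : R * R :=
  ((x.1 + (i.1 : nat)%:R) / N%:R, (x.2 + (i.2 : nat)%:R) / N%:R).

Definition unit_square {R : realType} : set (R * R) :=
  [set x | 0 <= x.1 <= 1 /\ 0 <= x.2 <= 1].

Fixpoint gsc_Q {R : realType} (N : nat) (D : {set 'I_N * 'I_N}) (n : nat) : set (R * R) :=
  match n with
  | 0 => unit_square
  | n'.+1 => \bigcup_(i in [set i | i \in D]) (gsc_map i @` gsc_Q D n')
  end.

(* F is the attractor of the IFS {phi_i : i in D}: the (unique, by Hutchinson)
   nonempty compact set with F = U_{i in D} phi_i(F). *)
Definition gsc_attractor {R : realType} (N : nat) (D : {set 'I_N * 'I_N}) (F : set (R * R)) :=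
  F !=set0 /\ compact F /\ F = \bigcup_(i in [set i | i \in D]) (gsc_map i @` F).

(* Main.v *)
Require Import Defs.
From HB Require Import structures.
From mathcomp Require Import all_boot all_order all_algebra.
From mathcomp Require Import all_classical all_reals all_analysis.
From mathcomp Require Import zify ring lra.
Import numFieldNormedType.Exports.
Set Implicit Arguments. Unset Strict Implicit. Unset Printing Implicit Defensive.
Import Order.TTheory GRing.Theory Num.Theory.

Definition adjc (u v : nat * nat) : Prop :=
  (u.1 <= v.1 + 1 /\ v.1 <= u.1 + 1 /\ u.2 <= v.2 + 1 /\ v.2 <= u.2 + 1)%N.

Definition cconn (S : nat * nat -> Prop) : Prop :=
  forall T : nat * nat -> Prop, (forall x, T x -> S x) -> (exists x, T x) ->
  (forall u v, T u -> S v -> adjc u v -> T v) -> forall x, S x -> T x.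

Definition shiftc (N K : nat) (d : 'I_N * 'I_N) (u : nat * nat) : nat * nat :=
  ((d.1 : nat) * K + u.1, (d.2 : nat) * K + u.2)%N.

Fixpoint Acell (N : nat) (D : {set 'I_N * 'I_N}) (n : nat) : nat * nat -> Prop :=
  match n with
  | 0 => fun p => p = (0, 0)%N
  | n'.+1 => fun p => exists d, d \in D /\ exists u, @Acell N D n' u /\ p = shiftc (N ^ n') d u
  end.

Lemma Acell_bound N (D : {set 'I_N * 'I_N}) n u :
  Acell D n u -> (u.1 < N ^ n /\ u.2 < N ^ n)%N.
Proof.
elim: n u => [|n IH] u /=.
  by move=> ->.
move=> [d [_ [v [/IH [h1 h2] ->]]]] /=.
rewrite expnS.
have := ltn_ord d.1; have := ltn_ord d.2.
move: (N ^ n)%N h1 h2 => K h1 h2 l1 l2.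
split; nia.
Qed.

Lemma Acell_ne N (D : {set 'I_N * 'I_N}) n :
  (exists d, d \in D) -> exists u, Acell D n u.
Proof.
move=> [d dD]; elim: n => [|n [u hu]] /=; first by exists (0,0)%N.
by exists (shiftc (N ^ n) d u); exists d; split => //; exists u.
Qed.

Definition blockadj N (D : {set 'I_N * 'I_N}) n (d d' : 'I_N * 'I_N) : Prop :=
  exists u v, Acell D n u /\ Acell D n v /\ adjc (shiftc (N ^ n) d u) (shiftc (N ^ n) d' v).

Definition bconn N (D : {set 'I_N * 'I_N}) n : Prop :=
  forall DT : 'I_N * 'I_N -> Prop, (forall d, DT d -> d \in D) -> (exists d, DT d) ->
  (forall d d', DT d -> d' \in D -> blockadj D n d d' -> DT d') -> forall d, d \in D -> DT d.

Lemma adjc_shift N K (d : 'I_N * 'I_N) u v : adjc u v -> adjc (shiftc K d u) (shiftc K d v).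
Proof. rewrite /adjc /shiftc /=; lia. Qed.

Lemma compose_conn N (D : {set 'I_N * 'I_N}) n :
  cconn (Acell D n) -> bconn D n -> cconn (Acell D n.+1).
Proof.
move=> cA bB T TS [t Tt] Tcl.
have full : forall d u, d \in D -> Acell D n u -> T (shiftc (N ^ n) d u) ->
    forall v, Acell D n v -> T (shiftc (N ^ n) d v).
  move=> d u dD Au Tu v Av.
  suff: Acell D n v /\ T (shiftc (N ^ n) d v) by case.
  move: v Av; apply: (cA (fun v => Acell D n v /\ T (shiftc (N ^ n) d v))).
  - by move=> x [].
  - by exists u.
  - move=> x y [Ax Tx] Ay axy; split => //; apply: (Tcl _ _ Tx).
      by exists d; split => //; exists y.
    exact: adjc_shift.
pose DT d := d \in D /\ exists u, Acell D n u /\ T (shiftc (N ^ n) d u).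
have HDT : forall d, d \in D -> DT d.
  apply: bB.
  - by move=> d [].
  - have := TS _ Tt => -[d [dD [u [Au E]]]]; exists d; split => //; exists u; split => //.
    by rewrite -E.
  - move=> d d' [dD [u [Au Tu]]] d'D [x [y [Ax [Ay axy]]]].
    split => //; exists y; split => //.
    apply: (Tcl _ _ (full _ _ dD Au Tu _ Ax)) axy.
    by exists d'; split => //; exists y.
move=> x [d [dD [u [Au ->]]]].
have [_ [w [Aw Tw]]] := HDT _ dD.
exact: (full _ _ dD Aw Tw).
Qed.

Lemma shiftc_inj N K (d d' : 'I_N * 'I_N) u v :
  (u.1 < K)%N -> (u.2 < K)%N -> (v.1 < K)%N -> (v.2 < K)%N ->
  shiftc K d u = shiftc K d' v -> d = d'.
Proof.
rewrite /shiftc => h1 h2 h3 h4 [E1 E2].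
have e1 : (d.1 : nat) = d'.1.
  case: (ltngtP d.1 d'.1) => // c; exfalso; nia.
have e2 : (d.2 : nat) = d'.2.
  case: (ltngtP d.2 d'.2) => // c; exfalso; nia.
case: d d' e1 e2 {E1 E2} => [a b] [a' b'] /= e1 e2.
by congr pair; apply: val_inj.
Qed.

Lemma decompose_conn N (D : {set 'I_N * 'I_N}) n :
  cconn (Acell D n.+1) -> bconn D n.
Proof.
move=> cA DT DTD [d0 Dd0] DTcl.
have dD0 := DTD _ Dd0.
have [u0 Au0] := Acell_ne n (ex_intro _ d0 dD0).
pose T p := exists d, DT d /\ exists u, Acell D n u /\ p = shiftc (N ^ n) d u.
have HT : forall x, Acell D n.+1 x -> T x.
  apply: cA.
  - by move=> x [d [Dd [u [Au ->]]]]; exists d; split; [exact: DTD|exists u].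
  - by exists (shiftc (N ^ n) d0 u0); exists d0; split => //; exists u0.
  - move=> x y [d [Dd [u [Au ->]]]] [d' [d'D [v [Av ->]]]] axy.
    exists d'; split; last by exists v.
    by apply: (DTcl d) => //; exists u, v.
move=> d dD.
have [|d' [DTd' [u [Au E]]]] := HT (shiftc (N ^ n) d u0).
  by exists d; split => //; exists u0.
have [b1 b2] := Acell_bound Au0; have [b3 b4] := Acell_bound Au.
by rewrite (shiftc_inj b1 b2 b3 b4 E).
Qed.

Definition Wz N (D : {set 'I_N * 'I_N}) n (g : int * int) : Prop :=
  exists u v, Acell D n u /\ Acell D n v /\
  (- 1 <= Posz (N ^ n) * g.1 + Posz u.1 - Posz v.1 <= 1)%R /\
  (- 1 <= Posz (N ^ n) * g.2 + Posz u.2 - Posz v.2 <= 1)%R.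

Definition Tz N (D : {set 'I_N * 'I_N}) (g g' : int * int) : Prop :=
  exists e e', e \in D /\ e' \in D /\
  g'.1 = (Posz N * g.1 + Posz e.1 - Posz e'.1)%R /\
  g'.2 = (Posz N * g.2 + Posz e.2 - Posz e'.2)%R.

Definition boxz (g : int * int) := (- 1 <= g.1 <= 1 /\ - 1 <= g.2 <= 1)%R.

Lemma blockadj_W N (D : {set 'I_N * 'I_N}) n d d' :
  blockadj D n d d' <-> Wz D n (Posz d.1 - Posz d'.1, Posz d.2 - Posz d'.2)%R.
Proof.
rewrite /blockadj /Wz /adjc /shiftc /=; move: (N ^ n)%N => K.
split=> -[u [v [Au [Av H]]]]; exists u, v; do 2 split => //; nia.
Qed.

Lemma W_box N (D : {set 'I_N * 'I_N}) n g : (0 < N)%N -> Wz D n g -> boxz g.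
Proof.
move=> N0 [u [v [Au [Av [H1 H2]]]]].
have [a1 a2] := Acell_bound Au; have [b1 b2] := Acell_bound Av.
have : (0 < N ^ n)%N by rewrite expn_gt0 N0.
move: (N ^ n)%N a1 a2 b1 b2 H1 H2 => K a1 a2 b1 b2 H1 H2 K0.
rewrite /boxz; move: g H1 H2 => [g1 g2] /= H1 H2.
split; apply/andP; split; nia.
Qed.

Lemma W0 N (D : {set 'I_N * 'I_N}) g : boxz g -> Wz D 0 g.
Proof.
move=> [h1 h2]; exists (0,0)%N, (0,0)%N; do 2 split => //=; lia.
Qed.

Lemma idK (N K a b u v : nat) (g : int) :
  (Posz (N * K)%N * g + Posz (a * K + u)%N - Posz (b * K + v)%N =
   Posz K * (Posz N * g + Posz a - Posz b) + Posz u - Posz v)%R.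
Proof. rewrite !PoszD !PoszM; ring. Qed.

Lemma W_step N (D : {set 'I_N * 'I_N}) n g g' : Tz D g g' -> Wz D n g' -> Wz D n.+1 g.
Proof.
move=> [e [e' [eD [e'D [E1 E2]]]]] [u [v [Au [Av [H1 H2]]]]].
exists (shiftc (N ^ n) e u), (shiftc (N ^ n) e' v); split.
  by exists e; split => //; exists u.
split; first by exists e'; split => //; exists v.
by rewrite /shiftc /= expnS !idK -E1 -E2.
Qed.

Lemma W_unstep N (D : {set 'I_N * 'I_N}) n g : Wz D n.+1 g -> exists g', Tz D g g' /\ Wz D n g'.
Proof.
move=> [u' [v' [[e [eD [u [Au ->]]]] [[e' [e'D [v [Av ->]]]] [H1 H2]]]]].
exists (Posz N * g.1 + Posz e.1 - Posz e'.1, Posz N * g.2 + Posz e.2 - Posz e'.2)%R.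
split; first by exists e, e'.
exists u, v; do 2 split => //.
by move: H1 H2; rewrite /shiftc /= expnS !idK.
Qed.

Lemma W_loop N (D : {set 'I_N * 'I_N}) n g : Tz D g g -> boxz g -> Wz D n g.
Proof.
move=> T B; elim: n => [|n IH]; first exact: W0.
exact: W_step T IH.
Qed.

Lemma keyK N (D : {set 'I_N * 'I_N}) d g1 g2 : (2 <= N)%N -> boxz d -> boxz g1 -> boxz g2 ->
  Tz D d g1 -> Tz D g1 g2 -> exists g, Tz D d g /\ Tz D g g /\ boxz g.
Proof.
move=> N2 Bd B1 B2 T1 T2.
have [d0|dn0] : (d = ((0:int),(0:int))) \/ (d <> ((0:int),(0:int))) by case: (d == ((0:int),(0:int))) /eqP; auto.
  move: T1 => [e [e' [eD [e'D _]]]].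
  exists ((0:int),(0:int)); rewrite d0; split; last split.
  - by exists e, e; split => //; split => //=; lia.
  - by exists e, e; split => //; split => //=; lia.
  - rewrite /boxz /=; lia.
have [e1|en1] : (g1 = d) \/ (g1 <> d) by case: (g1 == d) /eqP; auto.
  by exists d; rewrite -{2}e1; split => //; split => //; rewrite e1 in T1.
exists g1; split => //; split => //.
suff E : g1 = g2 by rewrite {2}E.
move: T1 T2 => [e [e' [eD [e'D [E1 E2]]]]] [f [f' [fD [f'D [F1 F2]]]]].
have := ltn_ord e.1; have := ltn_ord e.2; have := ltn_ord e'.1; have := ltn_ord e'.2.
have := ltn_ord f.1; have := ltn_ord f.2; have := ltn_ord f'.1; have := ltn_ord f'.2.
move: (e.1 : nat) (e.2 : nat) (e'.1 : nat) (e'.2 : nat) (f.1 : nat) (f.2 : nat) (f'.1 : nat) (f'.2 : nat) E1 E2 F1 F2 => a1 a2 b1 b2 c1 c2 c3 c4 E1 E2 F1 F2.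
move: d g1 g2 Bd B1 B2 dn0 en1 E1 E2 F1 F2 => [x1 x2] [y1 y2] [z1 z2] /= Bd B1 B2 dn0 en1 E1 E2 F1 F2 h1 h2 h3 h4 h5 h6 h7 h8.
rewrite /boxz /= in Bd B1 B2.
have : (x1 = -1 \/ x1 = 0 \/ x1 = 1)%R by lia.
have : (x2 = -1 \/ x2 = 0 \/ x2 = 1)%R by lia.
have : (y1 = -1 \/ y1 = 0 \/ y1 = 1)%R by lia.
have : (y2 = -1 \/ y2 = 0 \/ y2 = 1)%R by lia.
move=> Y2 Y1 X2 X1.
case: X1 => [X1|[X1|X1]]; case: X2 => [X2|[X2|X2]]; case: Y1 => [Y1|[Y1|Y1]]; case: Y2 => [Y2|[Y2|Y2]];
  move: E1 E2 F1 F2 dn0 en1; rewrite X1 X2 Y1 Y2 => E1 E2 F1 F2 dn0 en1;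
  try (exfalso; apply: dn0; reflexivity); try (exfalso; apply: en1; reflexivity);
  f_equal; lia.
Qed.

Lemma blockadj_up N (D : {set 'I_N * 'I_N}) n d d' : (2 <= N)%N ->
  blockadj D 2 d d' -> blockadj D n.+1 d d'.
Proof.
move=> N2; rewrite !blockadj_W => W2.
have N0 : (0 < N)%N by lia.
have Bd := W_box N0 W2.
have [g1 [T1 W1]] := W_unstep W2.
have B1 := W_box N0 W1.
have [g2 [T2 W0']] := W_unstep W1.
have B2 := W_box N0 W0'.
have [g [Tg [Tgg Bg]]] := keyK N2 Bd B1 B2 T1 T2.
exact: W_step Tg (W_loop n Tgg Bg).
Qed.

Lemma bconn_mono N (D : {set 'I_N * 'I_N}) n m :
  (forall d d', blockadj D n d d' -> blockadj D m d d') -> bconn D n -> bconn D m.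
Proof.
move=> H B DT h1 h2 h3; apply: B h1 h2 _ => d d' a b c; apply: h3 a b _; exact: H.
Qed.

Lemma conn_all N (D : {set 'I_N * 'I_N}) n : (2 <= N)%N ->
  cconn (Acell D 3) -> cconn (Acell D (n + 3)).
Proof.
move=> N2 c3; have b2 := decompose_conn c3.
elim: n => [|n IH] //.
rewrite addSn; apply: compose_conn IH _.
apply: bconn_mono b2 => d d'; rewrite (_ : (n + 3 = (n + 2).+1)%N); last by lia.
exact: blockadj_up.
Qed.

Local Open Scope classical_set_scope.
Local Open Scope ring_scope.

Definition sq {R : realType} (N n : nat) (c : nat * nat) : set (R * R) :=
  [set x | (c.1%:R <= x.1 * (N ^ n)%:R <= c.1%:R + 1) /\ (c.2%:R <= x.2 * (N ^ n)%:R <= c.2%:R + 1)].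

Lemma map_sq (R : realType) N (d : 'I_N * 'I_N) n u : (0 < N)%N ->
  gsc_map d @` (sq N n u) = sq (R:=R) N n.+1 (shiftc (N ^ n) d u).
Proof.
move=> N0; have Nr : (N%:R : R) != 0 by rewrite pnatr_eq0 -lt0n.
rewrite /sq /shiftc; apply/seteqP; split.
  move=> _ [y [/andP[h1 h2] /andP[h3 h4]] <-]; rewrite /gsc_map /= expnS !natrM !natrD !natrM.
  set K := ((N ^ n)%:R : R).
  have E : forall a b : R, (a + b) / N%:R * (N%:R * K) = (a + b) * K.
    by move=> a b; field.
  rewrite !E; split; apply/andP; split; nra.
move=> x [/andP[h1 h2] /andP[h3 h4]].
exists (x.1 * N%:R - (d.1 : nat)%:R, x.2 * N%:R - (d.2 : nat)%:R).
  move: h1 h2 h3 h4; rewrite /= expnS !natrM !natrD !natrM.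
  set K := ((N ^ n)%:R : R) => h1 h2 h3 h4.
  split; apply/andP; split; nra.
rewrite /gsc_map /=; case: x {h1 h2 h3 h4} => a b /=.
by congr pair; field.
Qed.

Lemma Q_eq (R : realType) N (D : {set 'I_N * 'I_N}) n : (0 < N)%N ->
  gsc_Q (R:=R) D n = \bigcup_(c in Acell D n) sq N n c.
Proof.
move=> N0; elim: n => [|n IH].
  apply/seteqP; split => x.
    move=> h; exists (0,0)%N => //; move: h; rewrite /unit_square /sq /= expn0 !mulr1 add0r.
    by move=> [? ?]; split.
  move=> [c -> ]; rewrite /unit_square /sq /= expn0 !mulr1 add0r.
  by move=> [? ?]; split.
rewrite /= IH; apply/seteqP; split => x.
  move=> [i iD [y [c Ac yc] <-]].
  exists (shiftc (N ^ n) i c); first by exists i; split => //; exists c.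
  by rewrite -map_sq //; exists y.
move=> [c' [i [iD [c [Ac ->]]]]]; rewrite -map_sq // => -[y yc <-].
by exists i => //; exists y => //; exists c.
Qed.

Lemma fst_mul_cont (R : realType) (K : R) : continuous (fun x : R * R => x.1 * K).
Proof.
move=> x; apply: (@continuous_comp _ _ _ (fun x : R * R => x.1) ( *%R^~ K)).
  exact: cvg_fst.
exact: mulrr_continuous.
Qed.

Lemma snd_mul_cont (R : realType) (K : R) : continuous (fun x : R * R => x.2 * K).
Proof.
move=> x; apply: (@continuous_comp _ _ _ (fun x : R * R => x.2) ( *%R^~ K)).
  exact: cvg_snd.
exact: mulrr_continuous.
Qed.

Lemma sq_closed (R : realType) N n c : closed (sq (R:=R) N n c).
Proof.
set K := ((N ^ n)%:R : R).
have -> : sq N n c = ((fun x : R * R => x.1 * K) @^-1` [set t | c.1%:R <= t]) `&`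
   ((fun x : R * R => x.1 * K) @^-1` [set t | t <= c.1%:R + 1]) `&`
   (((fun x : R * R => x.2 * K) @^-1` [set t | c.2%:R <= t]) `&`
   ((fun x : R * R => x.2 * K) @^-1` [set t | t <= c.2%:R + 1])).
  apply/seteqP; split => x /=.
    by move=> [/andP[? ?] /andP[? ?]].
  by move=> [[? ?] [? ?]]; split; apply/andP.
apply: closedI; apply: closedI.
- exact: (proj1 (continuous_closedP _) (@fst_mul_cont R K) _ (@closed_ge R _)).
- exact: (proj1 (continuous_closedP _) (@fst_mul_cont R K) _ (@closed_le R _)).
- exact: (proj1 (continuous_closedP _) (@snd_mul_cont R K) _ (@closed_ge R _)).
- exact: (proj1 (continuous_closedP _) (@snd_mul_cont R K) _ (@closed_le R _)).
Qed.

Lemma seg_conn_v (R : realType) (t b0 b1 : R) :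
  connected ((fun s : R => (t, s)) @` `[b0, b1]).
Proof.
apply: connected_continuous_connected; first exact: segment_connected.
apply: continuous_subspaceT => s; rewrite /continuous_at.
by apply: (@cvg_pair _ _ _ _ (nbhs t) (nbhs s)) => /=; [exact: cvg_cst|exact: cvg_id].
Qed.

Lemma seg_conn_h (R : realType) (t a0 a1 : R) :
  connected ((fun s : R => (s, t)) @` `[a0, a1]).
Proof.
apply: connected_continuous_connected; first exact: segment_connected.
apply: continuous_subspaceT => s; rewrite /continuous_at.
by apply: (@cvg_pair _ _ _ _ (nbhs s) (nbhs t)) => /=; [exact: cvg_id|exact: cvg_cst].
Qed.

Lemma rect_conn (R : realType) (a0 a1 b0 b1 : R) : a0 <= a1 -> b0 <= b1 ->
  connected [set x : R * R | a0 <= x.1 <= a1 /\ b0 <= x.2 <= b1].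
Proof.
move=> ha hb.
have -> : [set x : R * R | a0 <= x.1 <= a1 /\ b0 <= x.2 <= b1] =
  \bigcup_(t in `[a0, a1]) (((fun s : R => (t, s)) @` `[b0, b1]) `|`
                             ((fun s : R => (s, b0)) @` `[a0, a1])).
  apply/seteqP; split => [[x y] /= [h1 h2]|x [t /= ht [[s hs <-]|[s hs <-]]]].
  - by exists x; rewrite /= ?in_itv //=; left; exists y => //; rewrite in_itv.
  - by move: ht hs; rewrite !in_itv /= => ht hs.
  - move: ht hs; rewrite !in_itv /= => ht hs; split => //.
    by rewrite lexx hb.
apply: bigcup_connected.
  exists (a0, b0) => t _; right; exists a0 => //.
  by rewrite /= in_itv /= lexx ha.
move=> t ht; apply: connectedU; last first.
- exact: seg_conn_h.
- exact: seg_conn_v.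
- exists (t, b0); split.
    by exists b0 => //; rewrite /= in_itv /= lexx hb.
  by exists t.
Qed.

Lemma Kpos (R : realType) N n : (0 < N)%N -> 0 < ((N ^ n)%:R : R).
Proof. by move=> N0; rewrite ltr0n expn_gt0 N0. Qed.

Lemma sq_conn (R : realType) N n c : (0 < N)%N -> connected (sq (R:=R) N n c).
Proof.
move=> N0; have K0 := Kpos R n N0; set K := ((N ^ n)%:R : R) in K0 *.
have -> : sq N n c = [set x : R * R | c.1%:R / K <= x.1 <= (c.1%:R + 1) / K /\
                                        c.2%:R / K <= x.2 <= (c.2%:R + 1) / K].
  by apply/seteqP; split => x /=; rewrite !ler_pdivrMr // !ler_pdivlMr.
apply: rect_conn; rewrite ler_pdivrMr // divfK ?gt_eqF //; lra.
Qed.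

Lemma sq_adj (R : realType) N n c c' (x : R * R) :
  sq N n c x -> sq N n c' x -> adjc c c'.
Proof.
rewrite /sq /adjc /= => -[/andP[h1 h2] /andP[h3 h4]] [/andP[h5 h6] /andP[h7 h8]].
have L : forall a b : nat, (a%:R : R) <= b%:R + 1 -> (a <= b + 1)%N.
  by move=> a b h; rewrite -(ler_nat R) natrD.
split; [apply: L; lra|split; [apply: L; lra|split; apply: L; lra]].
Qed.

Lemma adj_sq (R : realType) N n c c' : (0 < N)%N -> adjc c c' ->
  exists x : R * R, sq N n c x /\ sq N n c' x.
Proof.
move=> N0; have K0 := Kpos R n N0; set K := ((N ^ n)%:R : R) in K0 *.
rewrite /adjc => -[a1 [a2 [a3 a4]]].
exists ((maxn c.1 c'.1)%:R / K, (maxn c.2 c'.2)%:R / K).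
rewrite /sq /= -/K !divfK ?gt_eqF //.
have L : forall a b : nat, (a <= b)%N -> (a%:R : R) <= b%:R by move=> a b; rewrite ler_nat.
have L1 : forall a b : nat, (a <= b + 1)%N -> (a%:R : R) <= b%:R + 1.
  by move=> a b h; rewrite natr1 ler_nat; lia.
split; split; apply/andP; split; (apply: L; lia) || (apply: L1; lia).
Qed.

Lemma Acell_finite N (D : {set 'I_N * 'I_N}) n (P : nat * nat -> Prop) :
  (forall c, P c -> Acell D n c) -> finite_set P.
Proof.
move=> PA; apply: (@sub_finite_set _ _ (`I_(N ^ n) `*` `I_(N ^ n))).
  by move=> c /PA /Acell_bound [h1 h2]; split.
by apply: finite_setX.
Qed.

Lemma union_closed (R : realType) N (D : {set 'I_N * 'I_N}) n (P : nat * nat -> Prop) :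
  (forall c, P c -> Acell D n c) -> closed (\bigcup_(c in P) sq (R:=R) N n c).
Proof.
move=> PA; apply: closed_bigcup; first exact: Acell_finite PA.
move=> c _; exact: sq_closed.
Qed.

Definition psi {R : realType} (N n : nat) (c : nat * nat) (x : R * R) : R * R :=
  ((x.1 + c.1%:R) / (N ^ n)%:R, (x.2 + c.2%:R) / (N ^ n)%:R).

Lemma map_psi (R : realType) N (d : 'I_N * 'I_N) n u (x : R * R) : (0 < N)%N ->
  gsc_map d (psi N n u x) = psi N n.+1 (shiftc (N ^ n) d u) x.
Proof.
move=> N0; have Nr : (N%:R : R) != 0 by rewrite pnatr_eq0 -lt0n.
have Kn : ((N ^ n)%:R : R) != 0 by rewrite gt_eqF // Kpos.
rewrite /gsc_map /psi /shiftc /= expnS !natrM !natrD !natrM.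
by congr pair; field; apply/andP.
Qed.

Lemma psi_sq (R : realType) N n c (y : R * R) : (0 < N)%N ->
  unit_square y -> sq N n c (psi N n c y).
Proof.
move=> N0; have K0 : ((N ^ n)%:R : R) != 0 by rewrite gt_eqF // Kpos.
rewrite /unit_square /sq /psi /= !divfK // => -[/andP[h1 h2] /andP[h3 h4]].
by split; apply/andP; split; lra.
Qed.

Lemma F_dec (R : realType) N (D : {set 'I_N * 'I_N}) (F : set (R * R)) n : (0 < N)%N ->
  F = \bigcup_(i in [set i | i \in D]) (gsc_map i @` F) ->
  (forall x, F x -> exists c, Acell D n c /\ exists y, F y /\ x = psi N n c y) /\
  (forall c y, Acell D n c -> F y -> F (psi N n c y)).
Proof.
move=> N0 FE; elim: n => [|n [IH1 IH2]].
  have P0 : forall y : R * R, psi N 0 (0,0)%N y = y.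
    by case=> a b; rewrite /psi /= expn0 !addr0 !divr1.
  split; first by move=> x Fx; exists (0,0)%N; split => //; exists x; rewrite P0.
  by move=> c y /= -> Fy; rewrite P0.
split.
  move=> x; rewrite {1}FE => -[i iD [z Fz <-]].
  have [c [Ac [y [Fy ->]]]] := IH1 _ Fz.
  exists (shiftc (N ^ n) i c); split; first by exists i; split => //; exists c.
  by exists y; split => //; rewrite map_psi.
move=> c' y [d [dD [c [Ac ->]]]] Fy.
rewrite -map_psi // FE; exists d => //; exists (psi N n c y) => //.
exact: IH2.
Qed.

Lemma arch_small (R : realType) N (x M : R) : (2 <= N)%N ->
  (forall n, (N ^ n)%:R * x <= M) -> x <= 0.
Proof.
move=> N2 H; rewrite leNgt; apply/negP => x0.
set m := (Num.Def.trunc (M / x)).+1.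
have h1 : M / x < m%:R := truncnS_gt _.
have h2 : (m%:R : R) <= (N ^ m)%:R by rewrite ler_nat; apply: ltnW; apply: ltn_expl.
have := H m; rewrite ltr_pdivrMr // in h1.
nra.
Qed.

Lemma F_sub_unit (R : realType) N (D : {set 'I_N * 'I_N}) (F : set (R * R)) : (2 <= N)%N ->
  compact F -> F = \bigcup_(i in [set i | i \in D]) (gsc_map i @` F) ->
  F `<=` unit_square.
Proof.
move=> N2 cF FE; have N0 : (0 < N)%N by lia.
case: (compact_bounded cF) => M [Mr HM].
have Mlt : M < `|M| + 1 by have := ler_norm M; lra.
have HB := HM _ Mlt; set B := `|M| + 1 in HB.
have HB' : forall y, F y -> `|y.1| <= B /\ `|y.2| <= B.
  by move=> y /HB /=; rewrite prod_normE ge_max => /andP[].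
move=> x Fx.
have key : forall n, exists c, Acell D n c /\ exists y : R * R, F y /\ x = psi N n c y.
  by move=> n; exact: (proj1 (F_dec n N0 FE)) _ Fx.
have X1 : forall n, (N ^ n)%:R * (- x.1) <= B /\ (N ^ n)%:R * (x.1 - 1) <= B /\
                    (N ^ n)%:R * (- x.2) <= B /\ (N ^ n)%:R * (x.2 - 1) <= B.
  move=> n; have [c [Ac [y [Fy ->]]]] := key n.
  have [b1 b2] := Acell_bound Ac.
  have [hy1 hy2] := HB' _ Fy.
  have K0 := Kpos R n N0; set K := ((N ^ n)%:R : R) in K0 *.
  have c1K : (c.1%:R : R) + 1 <= K by rewrite /K natr1 ler_nat.
  have c2K : (c.2%:R : R) + 1 <= K by rewrite /K natr1 ler_nat.
  have c10 : (0 : R) <= c.1%:R by [].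
  have c20 : (0 : R) <= c.2%:R by [].
  move: hy1 hy2; rewrite /psi /= => hy1 hy2.
  have E : forall a : R, K * (a / K) = a by move=> a; rewrite mulrC divfK // gt_eqF.
  rewrite !mulrN !mulrBr !mulr1 !E.
  have := ler_norm y.1; have := ler_norm y.2.
  have n1 : - y.1 <= `|y.1| by rewrite -normrN ler_norm.
  have n2 : - y.2 <= `|y.2| by rewrite -normrN ler_norm.
  move=> *; split; [lra|split; [lra|split; lra]].
rewrite /unit_square; split; apply/andP; split.
- suff : - x.1 <= 0 by lra.
  by apply: (@arch_small R N _ B N2) => n; have [? _] := X1 n.
- suff : x.1 - 1 <= 0 by lra.
  by apply: (@arch_small R N _ B N2) => n; have [_ [? _]] := X1 n.
- suff : - x.2 <= 0 by lra.
  by apply: (@arch_small R N _ B N2) => n; have [_ [_ [? _]]] := X1 n.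
- suff : x.2 - 1 <= 0 by lra.
  by apply: (@arch_small R N _ B N2) => n; have [_ [_ [_ ?]]] := X1 n.
Qed.

Lemma minseq (R : realType) (s : seq ((R * R) * R)) :
  (forall p, p \in s -> 0 < p.2) -> exists e : R, 0 < e /\ forall p, p \in s -> e <= p.2.
Proof.
elim: s => [|q s IH] H; first by exists 1; split.
have [|e [e0 He]] := IH; first by move=> p ps; apply: H; rewrite inE ps orbT.
have q0 : 0 < q.2 by apply: H; rewrite inE eqxx.
exists (Num.min q.2 e); split; first by rewrite lt_min q0 e0.
move=> p; rewrite inE => /orP[/eqP ->|ps]; first by rewrite ge_min lexx.
by rewrite ge_min He ?orbT.
Qed.

Lemma cc (K : realType) (V : normedModType K) (B : set V) : compact B -> cover_compact B.
Proof. by rewrite compact_cover. Qed.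

Lemma eps_sep (R : realType) (B O : set (R * R)) : compact B -> open O -> B `<=` O ->
  exists e : R, 0 < e /\ forall x y, B x -> ball x e y -> O y.
Proof.
move=> cB oO BO.
have {}cB : cover_compact B := @cc R _ B cB.
pose Ds := [set p : (R * R) * R | B p.1 /\ 0 < p.2 /\ ball p.1 (p.2 + p.2) `<=` O].
have covB : B `<=` cover Ds (fun p => ball p.1 p.2).
  move=> x Bx.
  have := @open_nbhs_nbhs _ x O (conj oO (BO _ Bx)).
  move=> /nbhs_ballP [e e0 He].
  exists (x, e / 2); last by apply: ball_center (PosNum _); rewrite divr_gt0.
  split => //=; split; first by rewrite divr_gt0.
  by rewrite -splitr.
have [D' D'D cov] := cB _ Ds (fun p => ball p.1 p.2) (fun p _ => ball_open p.1 p.2) covB.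
have [e [e0 He]] := minseq (s := finmap.enum_fset D') (fun p pD => proj1 (proj2 (set_mem (D'D p pD)))).
exists e; split => // x y Bx bxy.
have [p pD xp] := cov x Bx.
have [_ [_ sub]] := set_mem (D'D p pD).
apply: sub; apply: (ball_triangle xp); apply: le_ball bxy.
exact: He.
Qed.

Lemma conn_to_cconn (R : realType) N (D : {set 'I_N * 'I_N}) n (S : set (R * R)) :
  (0 < N)%N -> connected S -> S `<=` \bigcup_(c in Acell D n) sq N n c ->
  (forall c, Acell D n c -> exists x, S x /\ sq N n c x) -> cconn (Acell D n).
Proof.
move=> N0 cS Ssub Sne T TA [t Tt] Tcl.
pose U := \bigcup_(c in T) sq (R:=R) N n c.
pose V := \bigcup_(c in (fun c => Acell D n c /\ ~ T c)) sq (R:=R) N n c.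
have UV : forall x, U x -> V x -> False.
  move=> x [c Tc xc] [c' [Ac' nTc'] xc'].
  by apply: nTc'; apply: (Tcl c c' Tc Ac'); exact: sq_adj xc xc'.
have E : S `&` U = S.
  apply: cS.
  - by have [x [Sx sx]] := Sne t (TA _ Tt); exists x; split => //; exists t.
  - exists (~` V); first by rewrite openC /V; apply: (union_closed (D := D)) => c [].
    apply/seteqP; split => x [Sx hx]; split => //.
      by move=> Vx; exact: UV hx Vx.
    have [c Ac xc] := Ssub _ Sx.
    have [Tc|nTc] := pselect (T c); first by exists c.
    by exfalso; apply: hx; exists c.
  - by exists U; first exact: union_closed TA.
move=> c Ac; have [x [Sx xc]] := Sne c Ac.
have : (S `&` U) x by rewrite E.
case=> _ [c'' Tc'' xc''].
exact: (Tcl c'' c Tc'' Ac (sq_adj xc'' xc)).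
Qed.

Lemma cconn_to_conn (R : realType) N (D : {set 'I_N * 'I_N}) n :
  (0 < N)%N -> cconn (Acell D n) -> connected (\bigcup_(c in Acell D n) sq (R:=R) N n c).
Proof.
move=> N0 cA B [b Bb] [Op oO BO] [C cC BC].
set Q := \bigcup_(c in Acell D n) sq N n c in BO BC *.
have Bsub : B `<=` Q by rewrite BO; move=> x [].
have helper : forall c, Acell D n c -> (exists x, sq N n c x /\ B x) -> sq N n c `<=` B.
  move=> c Ac [x [xc Bx]].
  have sqQ : sq N n c `<=` Q by move=> y yc; exists c.
  have E : sq N n c `&` B = sq N n c.
  apply: (@sq_conn R N n c N0).
  - by exists x.
  - exists Op => //; apply/seteqP; split => y [yc hy]; split => //.
      by move: hy; rewrite BO => -[].
    by rewrite BO; split => //; exact: sqQ.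
  - exists C => //; apply/seteqP; split => y [yc hy]; split => //.
      by move: hy; rewrite BC => -[].
    by rewrite BC; split => //; exact: sqQ.
  move=> y yc; have : (sq N n c `&` B) y by rewrite E.
  by case.
pose T c := Acell D n c /\ sq N n c `<=` B.
have HT : forall c, Acell D n c -> T c.
  apply: cA.
  - by move=> c [].
  - have [c Ac bc] := Bsub _ Bb; exists c; split => //.
    by apply: helper => //; exists b.
  - move=> u v [Au Bu] Av auv; split => //.
    have [x [xu xv]] := @adj_sq R N n _ _ N0 auv.
    by apply: helper => //; exists x; split => //; apply: Bu.
apply/seteqP; split; first exact: Bsub.
by move=> x [c Ac xc]; exact: (proj2 (HT c Ac)) x xc.
Qed.

Lemma bl (R : realType) (x y : R * R) e : `|x.1 - y.1| < e -> `|x.2 - y.2| < e -> ball x e y.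
Proof. by move=> h1 h2; rewrite -ball_normE /= prod_normE /= gt_max h1 h2. Qed.

Lemma sq_close (R : realType) N n c c' (x y : R * R) (e : R) : (0 < N)%N ->
  2 < (N ^ n)%:R * e -> sq N n c x -> sq N n c' y -> adjc c c' -> ball x e y.
Proof.
move=> N0 Ke; have K0 := Kpos R n N0; set K := ((N ^ n)%:R : R) in K0 Ke *.
rewrite /sq /adjc -/K => -[/andP[h1 h2] /andP[h3 h4]] [/andP[h5 h6] /andP[h7 h8]] [a1 [a2 [a3 a4]]].
have L1 : forall a b : nat, (a <= b + 1)%N -> (a%:R : R) <= b%:R + 1.
  by move=> a b h; rewrite natr1 ler_nat; lia.
have := L1 _ _ a1; have := L1 _ _ a2; have := L1 _ _ a3; have := L1 _ _ a4 => b4 b3 b2 b1.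
apply: bl; rewrite ltr_norml; apply/andP; split; nra.
Qed.

Lemma F_to_cconn (R : realType) N (D : {set 'I_N * 'I_N}) (F : set (R * R)) n :
  (2 <= N)%N -> gsc_attractor D F -> connected F -> cconn (Acell D n).
Proof.
move=> N2 [[y0 Fy0] [cF FE]] cnF; have N0 : (0 < N)%N by lia.
have Fu := F_sub_unit N2 cF FE.
have [dec1 dec2] := F_dec n N0 FE.
apply: (conn_to_cconn N0 cnF).
  move=> x Fx; have [c [Ac [y [Fy ->]]]] := dec1 _ Fx.
  by exists c => //; apply: psi_sq => //; apply: Fu.
move=> c Ac; exists (psi N n c y0); split; first exact: dec2.
by apply: psi_sq => //; apply: Fu.
Qed.

Lemma Q_to_cconn (R : realType) N (D : {set 'I_N * 'I_N}) n :
  (0 < N)%N -> connected (gsc_Q (R:=R) D n) -> cconn (Acell D n).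
Proof.
move=> N0; rewrite Q_eq // => cQ.
apply: (conn_to_cconn N0 cQ) => // c Ac.
have [x [xc _]] := @adj_sq R N n c c N0 (ltac:(rewrite /adjc; lia)).
by exists x; split => //; exists c.
Qed.

Lemma cconn_to_Q (R : realType) N (D : {set 'I_N * 'I_N}) n :
  (0 < N)%N -> cconn (Acell D n) -> connected (gsc_Q (R:=R) D n).
Proof. by move=> N0 cA; rewrite Q_eq //; exact: cconn_to_conn. Qed.

Lemma cconn_to_F (R : realType) N (D : {set 'I_N * 'I_N}) (F : set (R * R)) :
  (2 <= N)%N -> gsc_attractor D F -> (forall m, cconn (Acell D (m + 3))) -> connected F.
Proof.
move=> N2 [[y0 Fy0] [cF FE]] cA; have N0 : (0 < N)%N by lia.
have Fu := F_sub_unit N2 cF FE.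
move=> B [b Bb] [Op oO BO] [C cC BC].
have BF : B `<=` F by rewrite BO => x [].
have cB : compact B by rewrite BC; exact: compact_closedI.
have BOp : B `<=` Op by rewrite BO => x [].
have [e [e0 He]] := eps_sep cB oO BOp.
have [m Km] : exists m, 2 < (N ^ m)%:R * e.
  apply: contrapT => H.
  have : e <= 0.
    apply: (@arch_small R N e 2 N2) => k.
    by rewrite leNgt; apply/negP => h; apply: H; exists k.
  by rewrite leNgt e0.
set n := (m + 3)%N.
have Kn : 2 < (N ^ n)%:R * e.
  have : ((N ^ m)%:R : R) <= (N ^ n)%:R.
    by rewrite ler_nat /n leq_exp2l // leq_addr.
  nra.
have [dec1 dec2] := F_dec n N0 FE.
have Bin : forall x, F x -> Op x -> B x by move=> x Fx Ox; rewrite BO.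
pose T c := Acell D n c /\ exists x, B x /\ sq N n c x.
have HT : forall c, Acell D n c -> T c.
  apply: (cA m).
  - by move=> c [].
  - have [c [Ac [y [Fy E]]]] := dec1 _ (BF _ Bb).
    exists c; split => //; exists b; split => //.
    by rewrite E; apply: psi_sq => //; apply: Fu.
  - move=> u v [Au [x [Bx xu]]] Av auv; split => //.
    have z0 := @psi_sq R N n v y0 N0 (Fu _ Fy0).
    exists (psi N n v y0); split => //.
    apply: Bin; first exact: dec2.
    apply: (He x) => //; exact: sq_close Kn xu z0 auv.
apply/seteqP; split => // x Fx.
have [c [Ac [y [Fy E]]]] := dec1 _ Fx.
have xc : sq N n c x by rewrite E; apply: psi_sq => //; apply: Fu.
have [_ [z [Bz zc]]] := HT c Ac.
apply: Bin => //; apply: (He z) => //.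
by apply: sq_close Kn zc xc _; rewrite /adjc; lia.
Qed.

Unset Implicit Arguments.

Theorem mainTheorem8 (R : realType) (N : nat) (D : {set 'I_N * 'I_N}) (F : set (R * R)) :
  (2 <= N)%N -> (1 < #|D|)%N -> (#|D| < N ^ 2)%N ->
  gsc_attractor D F ->
  (connected F <-> connected (gsc_Q (R:=R) D 3)).
Proof.
move=> N2 _ _ att; have N0 : (0 < N)%N by lia.
split => [cF|cQ].
  exact: (cconn_to_Q N0 (@F_to_cconn R N D F 3 N2 att cF)).
apply: (cconn_to_F N2 att) => m.
exact: conn_all N2 (Q_to_cconn N0 cQ).
Qed.
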